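(* Consider the following second-order cone optimal control problem over time steps $k=0,\dots,K-1$ and EVs $n=1,\dots,N$: \begin{align*} \min\;& \sum_{n=1}^N\sum_{k=0}^{K-1} q_n\,(s_n(k+1)-1)^2 + r_n\,(i_n(k))^2\\ \text{s.t. }& T(k+1)=\tau T(k)+\gamma e(k)+\rho T_a(k),\\ & e(k)\ge (i_{\text{total}}(k))^2,\\ & s_n(k+1)=s_n(k)+\eta_n i_n(k),\\ & i_{\text{total}}(k)=i_d(k)+\sum_{n=1}^N i_n(k),\\ & T(k+1)\le T^{\max},\\ & s_n(k+1)\in[\hat s_n(k+1),1],\\ & i_n(k)\in[0,i_n^{\max}],\\ & T(0)=T_{\text{meas}},\quad s_n(0)=s_{\text{meas},n}. \end{align*} Take an optimal solution together with associated Lagrange multipliers: $\mu_T^{k+1}\ge 0$ for the constraint $T(k+1)\le T^{\max}$, and $\mu_e^k\ge 0$ for the constraint $e(k)\ge(i_{\text{total}}(k))^2$. Then $k+1$ is the last time instance for which the temperature limit $T(k+1)\le T^{\max}$ is strictly active if and only if $k$ is the largest integer for which the relaxed constraint $e(k)\ge (i_{\text{total}}(k))^2$ is tight.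
   Context: Parameters: - $\tau=e^{-b\Delta t}\in(0,1)$ with $b,\Delta t>0$, and $\rho=1-\tau$; - $\gamma>0$; - $T_a(k)$ is a given ambient temperature sequence; - $i_d(k)\ge0$ is a given background current; - $q_n>0$, $r_n\ge 0$, $\eta_n>0$ and $i_n^{\max}>0$ are EV parameters; - $\hat s_n(k+1)=\bar s_n$ if $k+1\ge\bar k_n$ and $0$ otherwise, where $\bar s_n\in[0,1]$ and $\bar k_n\in\{0,\dots,K\}$. Following the paper's convention, the temperature limit is ''strictly active'' at $k+1$ when its multiplier satisfies $\mu_T^{k+1}>0$. The relaxed constraint is ''tight'' at $k$ when its multiplier satisfies $\mu_e^k>0$, in which case $e(k)=(i_{\text{total}}(k))^2$. *)

(* Defs.v *)
From HB Require Import structures.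
From mathcomp Require Import all_boot all_order all_algebra.
From mathcomp Require Import all_classical all_reals.
From mathcomp Require Import sequences exp.
Set Implicit Arguments. Unset Strict Implicit. Unset Printing Implicit Defensive.
Import Order.TTheory GRing.Theory Num.Theory.
Local Open Scope ring_scope.

(* Problem data.  Time index k : nat (relevant range 0..K), EV index n : 'I_N. *)
Record ocp_data (R : realType) (N : nat) := OcpData {
  K : nat;
  b : R; dt : R;
  gamma : R;
  Ta : nat -> R;
  idc : nat -> R;
  q : 'I_N -> R; r : 'I_N -> R; eta : 'I_N -> R; imax : 'I_N -> R;
  sbar : 'I_N -> R; kbar : 'I_N -> nat;
  Tmax : R; Tmeas : R; smeas : 'I_N -> R }.

Definition tau R N (p : ocp_data R N) : R := expR (- (b p * dt p)).
Definition rho R N (p : ocp_data R N) : R := 1 - tau p.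

Definition shat R N (p : ocp_data R N) (n : 'I_N) (j : nat) : R :=
  if (kbar p n <= j)%N then sbar p n else 0.

Definition data_ok R N (p : ocp_data R N) : Prop :=
  0 < b p /\ 0 < dt p /\ 0 < gamma p /\
  (forall k, 0 <= idc p k) /\
  (forall n, 0 < q p n /\ 0 <= r p n /\ 0 < eta p n /\ 0 < imax p n /\
             0 <= sbar p n <= 1 /\ (kbar p n <= K p)%N).

Record ocp_var (R : realType) (N : nat) := OcpVar {
  T : nat -> R; e : nat -> R; itot : nat -> R;
  s : 'I_N -> nat -> R; i : 'I_N -> nat -> R }.

Definition feasible R N (p : ocp_data R N) (x : ocp_var R N) : Prop :=
  T x 0 = Tmeas p /\ (forall n, s x n 0 = smeas p n) /\
  forall k, (k < K p)%N ->
    [/\ T x k.+1 = tau p * T x k + gamma p * e x k + rho p * Ta p k,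
        itot x k ^+ 2 <= e x k,
        itot x k = idc p k + \sum_(n < N) i x n k,
        T x k.+1 <= Tmax p &
        forall n, [/\ s x n k.+1 = s x n k + eta p n * i x n k,
                      shat p n k.+1 <= s x n k.+1 <= 1 &
                      0 <= i x n k <= imax p n]].

Definition cost R N (p : ocp_data R N) (x : ocp_var R N) : R :=
  \sum_(n < N) \sum_(k < K p)
     (q p n * (s x n k.+1 - 1) ^+ 2 + r p n * (i x n k) ^+ 2).

Definition optimal R N (p : ocp_data R N) (x : ocp_var R N) : Prop :=
  feasible p x /\ forall y, feasible p y -> cost p x <= cost p y.

(* The Lagrangian used is
   L = cost
     + sum_k lamT k    * (T(k+1) - tau T(k) - gamma e(k) - rho Ta(k))
     + sum_k muE k     * (itot(k)^2 - e(k))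
     + sum_k lamI k    * (itot(k) - i_d(k) - sum_n i_n(k))
     + sum_{n,k} lamS n k * (s_n(k+1) - s_n(k) - eta_n i_n(k))
     + sum_{j=1..K} muT j * (T(j) - Tmax)
     + sum_{n,j=1..K} (muSlo n j * (shat_n(j) - s_n(j)) + muShi n j * (s_n(j) - 1))
     + sum_{n,k} (muIlo n k * (- i_n(k)) + muIhi n k * (i_n(k) - imax_n))
     + nuT * (T(0) - Tmeas) + sum_n nuS n * (s_n(0) - smeas_n)
   with k ranging over 0..K-1.  muT and muE are the multipliers of the
   statement (muT j = mu_T^j, muE k = mu_e^k). *)
Record ocp_mult (R : realType) (N : nat) := OcpMult {
  lamT : nat -> R; muE : nat -> R; lamI : nat -> R; muT : nat -> R;
  lamS : 'I_N -> nat -> R; muSlo : 'I_N -> nat -> R; muShi : 'I_N -> nat -> R;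
  muIlo : 'I_N -> nat -> R; muIhi : 'I_N -> nat -> R;
  nuT : R; nuS : 'I_N -> R }.

Definition KKT R N (p : ocp_data R N) (x : ocp_var R N) (m : ocp_mult R N) : Prop :=
  (forall k, (k < K p)%N ->
     [/\ 0 <= muE m k, muE m k * (itot x k ^+ 2 - e x k) = 0,
         0 <= muT m k.+1, muT m k.+1 * (T x k.+1 - Tmax p) = 0 &
         forall n,
           [/\ 0 <= muSlo m n k.+1 /\
                 muSlo m n k.+1 * (shat p n k.+1 - s x n k.+1) = 0,
               0 <= muShi m n k.+1 /\ muShi m n k.+1 * (s x n k.+1 - 1) = 0,
               0 <= muIlo m n k /\ muIlo m n k * i x n k = 0 &
               0 <= muIhi m n k /\ muIhi m n k * (i x n k - imax p n) = 0]]) /\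
  (* stationarity in T(0), T(j) (1 <= j <= K-1), T(K) *)
  ((0 < K p)%N -> - (tau p * lamT m 0) + nuT m = 0) /\
  (forall j, (0 < j)%N -> (j < K p)%N ->
     lamT m j.-1 - tau p * lamT m j + muT m j = 0) /\
  ((0 < K p)%N -> lamT m (K p).-1 + muT m (K p) = 0) /\
  (* stationarity in e(k), itot(k), i_n(k) for k < K *)
  (forall k, (k < K p)%N ->
     [/\ - (gamma p * lamT m k) - muE m k = 0,
         2 * muE m k * itot x k + lamI m k = 0 &
         forall n, 2 * r p n * i x n k - eta p n * lamS m n k - lamI m k
                   - muIlo m n k + muIhi m n k = 0]) /\
  (* stationarity in s_n(0) and s_n(j) (1 <= j <= K) *)
  (forall n, (0 < K p)%N -> - lamS m n 0 + nuS m n = 0) /\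
  (forall n j, (0 < j)%N -> (j <= K p)%N ->
     2 * q p n * (s x n j - 1) + lamS m n j.-1
       - (if (j < K p)%N then lamS m n j else 0)
       - muSlo m n j + muShi m n j = 0).

(* Main.v *)
Require Import Defs.
From HB Require Import structures.
From mathcomp Require Import all_boot all_order all_algebra.
From mathcomp Require Import all_classical all_reals.
From mathcomp Require Import sequences exp.
From mathcomp Require Import zify ring lra.
Import Order.TTheory GRing.Theory Num.Theory.
Local Open Scope ring_scope.

Theorem corollary1 (R : realType) (N : nat) (p : ocp_data R N)
    (x : ocp_var R N) (m : ocp_mult R N) :
  data_ok p -> optimal p x -> KKT p x m ->
  forall k : nat, (k < K p)%N ->
    ((0 < muT m k.+1 /\
      forall j : nat, (k.+1 < j)%N -> (j <= K p)%N -> ~ (0 < muT m j))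
     <->
     (0 < muE m k /\
      forall j : nat, (k < j)%N -> (j < K p)%N -> ~ (0 < muE m j))).
Proof.
move=> [_ [_ [Hg _]]] _ [Hdual [_ [Hrec [Hlast [Hst _]]]]] k Hk.
have HE : forall j, (j < K p)%N -> muE m j = - (gamma p * lamT m j).
  by move=> j Hj; have [H _ _] := Hst j Hj; lra.
have HEge : forall j, (j < K p)%N -> 0 <= muE m j.
  by move=> j Hj; have [H _ _ _ _] := Hdual j Hj.
have HTge : forall j, (0 < j)%N -> (j <= K p)%N -> 0 <= muT m j.
  move=> j H0 Hj; have [_ _ H _ _] := Hdual j.-1 (ltac:(lia)).
  by rewrite prednK in H.
have Hstep : forall j, (j < K p)%N ->
   lamT m j = (if (j.+1 < K p)%N then tau p * lamT m j.+1 else 0) - muT m j.+1.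
  move=> j Hj; case: ifP => Hj1.
    have := Hrec j.+1 isT Hj1 => /=; lra.
  have HK : K p = j.+1 by lia.
  have := Hlast (ltac:(lia)); rewrite HK /=; lra.
split.
- move=> [Hpos Hz].
  have Hz' : forall j, (k.+1 < j)%N -> (j <= K p)%N -> muT m j = 0.
    move=> j H1 H2; have := HTge j (ltac:(lia)) H2; have := Hz j H1 H2; lra.
  have Hl : forall d, (k < (K p).-1 - d)%N -> lamT m ((K p).-1 - d) = 0.
    elim=> [|d IH] H.
      rewrite subn0 Hstep; last lia.
      have -> : ((K p).-1.+1 < K p)%N = false by lia.
      rewrite Hz'; [lra|lia|lia].
    rewrite Hstep; last lia.
    have -> : (((K p).-1 - d.+1).+1 = (K p).-1 - d)%N by lia.
    have -> : ((K p).-1 - d < K p)%N = true by lia.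
    rewrite IH; last lia.
    rewrite Hz'; [lra|lia|lia].
  have Hl' : forall j, (k < j)%N -> (j < K p)%N -> lamT m j = 0.
    move=> j H1 H2; have -> : (j = (K p).-1 - ((K p).-1 - j))%N by lia.
    apply: Hl; lia.
  split.
    rewrite HE // Hstep //.
    case: ifP => H.
      rewrite Hl'; [|lia|lia].
      rewrite mulr0 add0r mulrN opprK; exact: mulr_gt0.
    rewrite add0r mulrN opprK; exact: mulr_gt0.
  move=> j H1 H2; rewrite HE // Hl' //; lra.
- move=> [Hpos Hz].
  have Hl : forall j, (k < j)%N -> (j < K p)%N -> lamT m j = 0.
    move=> j H1 H2; have := HEge j H2; have := Hz j H1 H2; rewrite HE //.
    move=> A B; have : gamma p * lamT m j = 0 by lra.
    move/eqP; rewrite mulf_eq0 => /orP [/eqP G|/eqP //]; lra.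
  split.
    move: Hpos; rewrite HE // Hstep //.
    case: ifP => H.
      rewrite Hl; [|lia|lia].
      rewrite mulr0 add0r mulrN opprK pmulr_rgt0 //.
    rewrite add0r mulrN opprK pmulr_rgt0 //.
  move=> j H1 H2 Hj.
  have E := Hstep j.-1 (ltac:(lia)); rewrite prednK in E; last lia.
  rewrite (Hl j.-1) in E; [|lia|lia].
  move: E; case: ifP => H3 E.
    rewrite (Hl j) in E; [|lia|lia].
    rewrite mulr0 add0r in E; lra.
  rewrite add0r in E; lra.
Qed.
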